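(* Let $P$ be a $p$-group of order $p^m$ and $T \cong \mathbb{Z}_p^d$ a $P$-module. For $n \geq 1$ and $r \geq 2m$, $$H^n(P,T/p^rT) = \mathrm{Image}(pro_r) \oplus \mathrm{Image}(inc_{r,m}),$$ with $\mathrm{Image}(pro_r) \cong H^n(P,T)$ and $\mathrm{Image}(inc_{r,m}) \cong H^{n+1}(P,T)$. Moreover this splitting is natural with respect to restriction to subgroups of $P$ and with respect to the action of $P$ on cohomology groups.
   Context: $\mathbb{Z}_p$ denotes the $p$-adic integers; modules are right modules written additively. $pro_r: H^n(P,T) \to H^n(P,T/p^rT)$ is induced by the projection $T \to T/p^rT$, and $inc_{r,m}: H^n(P, p^{r-m}T/p^rT) \to H^n(P,T/p^rT)$ is induced by the inclusion $p^{r-m}T/p^rT \to T/p^rT$. The action of $P$ on $H^n(P,M)$ is induced by $\gamma \mapsto \gamma^{g^{-1}}$, where $\gamma^g(g_1,\dots,g_n) = \gamma(g_1^g,\dots,g_n^g)^{g^{-1}}$. *)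

(* Defs.v *)
From HB Require Import structures.
From mathcomp Require Import all_boot all_order all_algebra all_fingroup.
Set Implicit Arguments. Unset Strict Implicit. Unset Printing Implicit Defensive.
Import GRing.Theory.
Local Open Scope ring_scope.

(* A p-adic vector is a compatible sequence x k in (Z/p^k)^d, entries normalized in [0,p^k). *)
Definition padic_vec (p d : nat) (x : nat -> 'rV[int]_d) : Prop :=
  forall (k : nat) (i : 'I_d),
    (0 <= x k ord0 i < (p ^ k)%:Z) && ((x k.+1 ord0 i %% (p ^ k)%:Z)%Z == x k ord0 i).
Arguments padic_vec : clear implicits.

Definition iso_to_Zp_pow (p d : nat) (T : zmodType) : Prop :=
  exists phi : T -> nat -> 'rV[int]_d,
    [/\ forall t, padic_vec p d (phi t),
        forall a b (k : nat) (i : 'I_d),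
          phi (a + b) k ord0 i = ((phi a k ord0 i + phi b k ord0 i) %% (p ^ k)%:Z)%Z,
        injective phi &
        forall x, padic_vec p d x -> exists t, phi t = x].
Arguments iso_to_Zp_pow : clear implicits.

Section Cohom.
Variables (gT : finGroupType) (T : zmodType) (act : T -> gT -> T).
(* act t g = t^g : a right action of gT on T *)

Definition is_module (G : {group gT}) : Prop :=
  [/\ forall g a b, g \in G -> act (a + b) g = act a g + act b g,
      forall a, act a 1%g = a &
      forall g h a, g \in G -> h \in G -> act a (g * h)%g = act (act a g) h].

(* cochains: functions on sequences of group elements; only values on G^n matter *)
Definition cochain := seq gT -> T.

Definition cadd (f g : cochain) : cochain := fun s => f s + g s.
Definition cdiff (f g : cochain) : cochain := fun s => f s - g s.

Definition merge_at (i : nat) (s : seq gT) : seq gT :=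
  take i s ++ ((nth 1%g s i * nth 1%g s i.+1)%g :: drop i.+2 s).

(* standard inhomogeneous coboundary for the left action g.t := t^(g^-1) *)
Definition coboundary (n : nat) (f : cochain) : cochain := fun s =>
  act (f (behead s)) (head 1%g s)^-1%g
  + \sum_(i < n) f (merge_at i s) *~ ((-1) ^+ i.+1)
  + f (take n s) *~ ((-1) ^+ n.+1).

(* Coefficients A/B where B <= A are subgroups of T (P-stable): a cochain with values
   in A/B is represented by a cochain with values in A, modulo cochains with values in B. *)
Definition cochain_on (G : {group gT}) (A : T -> Prop) (n : nat) (f : cochain) : Prop :=
  forall s : seq gT, size s = n -> all (fun x => x \in G) s -> A (f s).

Definition cocycle (G : {group gT}) (A B : T -> Prop) (n : nat) (f : cochain) : Prop :=
  cochain_on G A n f /\ cochain_on G B n.+1 (coboundary n f).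

Definition cohom_trivial (G : {group gT}) (A B : T -> Prop) (n : nat) (f : cochain) : Prop :=
  match n with
  | O => cochain_on G B O f
  | k.+1 => exists g, cochain_on G A k g /\ cochain_on G B k.+1 (cdiff f (coboundary k g))
  end.

Definition fullT : T -> Prop := fun _ => True.
Definition zeroT : T -> Prop := fun t => t = 0.
Definition multiples (N : nat) : T -> Prop := fun t => exists u, t = u *+ N.

(* class of z in H^n(G, A/B) lies in the image of H^n(G, A'/B') *)
Definition in_img (G : {group gT}) (A B A' B' : T -> Prop) (n : nat) (z : cochain) : Prop :=
  exists2 f, cocycle G A' B' n f & cohom_trivial G A B n (cdiff z f).

(* Image(pro_r) and Image(inc_{r,m}) inside H^n(G, T/p^rT), as sets of representing cocycles *)
Definition Im_pro (p r : nat) (G : {group gT}) (n : nat) (z : cochain) : Prop :=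
  cocycle G fullT (multiples (p ^ r)) n z /\
  in_img G fullT (multiples (p ^ r)) fullT zeroT n z.

Definition Im_inc (p r m : nat) (G : {group gT}) (n : nat) (z : cochain) : Prop :=
  cocycle G fullT (multiples (p ^ r)) n z /\
  in_img G fullT (multiples (p ^ r)) (multiples (p ^ (r - m))) (multiples (p ^ r)) n z.

(* action of g on cochains : gamma |-> gamma^(g^-1), gamma^g(g_i) = gamma(g_i^g)^(g^-1) *)
Definition cohom_act (g : gT) (f : cochain) : cochain :=
  fun s => act (f (map (fun x => x ^ g^-1)%g s)) g.

(* Z1/K1 is isomorphic (as abelian group) to Z2/K2 *)
Definition subquot_iso (Z1 K1 Z2 K2 : cochain -> Prop) : Prop :=
  exists phi : cochain -> cochain,
    [/\ forall f, Z1 f -> Z2 (phi f),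
        forall f g, Z1 f -> Z1 g -> (K1 (cdiff f g) <-> K2 (cdiff (phi f) (phi g))),
        forall f g, Z1 f -> Z1 g -> K2 (cdiff (phi (cadd f g)) (cadd (phi f) (phi g))) &
        forall z, Z2 z -> exists2 f, Z1 f & K2 (cdiff (phi f) z)].

End Cohom.

Arguments fullT : clear implicits.
Arguments zeroT : clear implicits.
Arguments multiples : clear implicits.

(* Main.v *)
Require Import Defs.
From HB Require Import structures.
From mathcomp Require Import all_boot all_order all_algebra all_fingroup.
From mathcomp Require Import zify.
From Stdlib Require Import FunctionalExtensionality ClassicalEpsilon.
Set Implicit Arguments. Unset Strict Implicit. Unset Printing Implicit Defensive.
Import GRing.Theory Num.Theory.
Local Open Scope ring_scope.


Lemma addf0 (T : zmodType) (phi : T -> T) : (forall a b, phi (a + b) = phi a + phi b) -> phi 0 = 0.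
Proof. by move=> phD; apply: (addrI (phi 0)); rewrite -phD !addr0. Qed.
Lemma addfN (T : zmodType) (phi : T -> T) : (forall a b, phi (a + b) = phi a + phi b) -> forall a, phi (- a) = - phi a.
Proof. by move=> phD a; apply: (addrI (phi a)); rewrite -phD !subrr (addf0 phD). Qed.
Lemma addfMn (T : zmodType) (phi : T -> T) : (forall a b, phi (a + b) = phi a + phi b) -> forall a j, phi (a *+ j) = phi a *+ j.
Proof. move=> phD a; elim=> [|j IH]; first by rewrite !mulr0n (addf0 phD). by rewrite !mulrS phD IH. Qed.
Lemma addfMz (T : zmodType) (phi : T -> T) : (forall a b, phi (a + b) = phi a + phi b) -> forall a z, phi (a *~ z) = phi a *~ z.
Proof. move=> phD a [] j; rewrite ?NegzE ?mulrNz ?mulrz_nat ?(addfN phD) (addfMn phD) //. Qed.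
Lemma addf_sum (T : zmodType) (phi : T -> T) (I : Type) (r : seq I) (Pr : pred I) (F : I -> T) :
  (forall a b, phi (a + b) = phi a + phi b) -> phi (\sum_(i <- r | Pr i) F i) = \sum_(i <- r | Pr i) phi (F i).
Proof. move=> phD; apply: big_morph; [exact: phD | exact: addf0]. Qed.

Lemma AC6 (T : zmodType) (a a' b b' c c' : T) : a + a' + b + b' + c + c' = a + b + c + (a' + b' + c').
Proof. rewrite -!addrA; congr (_ + _); rewrite addrCA; congr (_ + _).
by rewrite [RHS]addrCA; congr (_ + _); rewrite [RHS]addrCA. Qed.

Lemma actD (gT : finGroupType) (T : zmodType) (act : T -> gT -> T) (G : {group gT}) :
  is_module act G -> forall g, g \in G -> forall a b, act (a + b) g = act a g + act b g.
Proof. by case=> H _ _ g Hg a b; apply: H. Qed.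

Lemma cob_morph (gT : finGroupType) (T : zmodType) (act : T -> gT -> T) (phi : T -> T) n f s :
  (forall a b, phi (a + b) = phi a + phi b) ->
  (forall t, phi (act t ((head 1 s)^-1)%g) = act (phi t) ((head 1 s)^-1)%g) ->
  coboundary act n (fun t => phi (f t)) s = phi (coboundary act n f s).
Proof.
move=> phD phA; rewrite /coboundary !phD phA (addf_sum _ _ _ phD) (addfMz phD); congr (_ + _ + _).
by apply: eq_bigr => i _; rewrite (addfMz phD).
Qed.

Lemma cob_add (gT : finGroupType) (T : zmodType) (act : T -> gT -> T) (G : {group gT}) n f g s :
  is_module act G -> head 1%g s \in G ->
  coboundary act n (fun t => f t + g t) s = coboundary act n f s + coboundary act n g s.
Proof.
move=> Hm Hh; rewrite /coboundary (actD Hm) ?groupV //.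
rewrite (eq_bigr (fun i : 'I_n => f (merge_at i s) *~ ((-1) ^+ i.+1) + g (merge_at i s) *~ ((-1) ^+ i.+1))); last by move=> i _; rewrite mulrzDl.
rewrite big_split /= mulrzDl.
by rewrite !addrA AC6 !addrA.
Qed.
Lemma nth_inG (gT : finGroupType) (G : {group gT}) s i :
  all (fun x => x \in G) s -> nth 1%g s i \in G.
Proof.
move=> /allP H; case: (ltnP i (size s)) => Hi; first exact/H/mem_nth.
by rewrite nth_default ?group1.
Qed.

Lemma head_inG (gT : finGroupType) (G : {group gT}) s :
  all (fun x => x \in G) s -> head 1%g s \in G.
Proof. by case: s => [|x s] /=; [rewrite group1 | case/andP]. Qed.

Lemma all_take' (T : Type) (a : pred T) k s : all a s -> all a (take k s).
Proof. by rewrite -{1}(cat_take_drop k s) all_cat => /andP[]. Qed.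
Lemma all_drop' (T : Type) (a : pred T) k s : all a s -> all a (drop k s).
Proof. by rewrite -{1}(cat_take_drop k s) all_cat => /andP[]. Qed.
Lemma all_behead' (T : Type) (a : pred T) s : all a s -> all a (behead s).
Proof. by case: s => //= x s /andP[]. Qed.

Lemma size_mergeat (gT : finGroupType) i (s : seq gT) :
  (i.+1 < size s)%N -> size (merge_at i s) = (size s).-1.
Proof. move=> H; rewrite /merge_at size_cat /= size_take size_drop; case: ifP; lia. Qed.

Lemma all_merge (gT : finGroupType) (G : {group gT}) i s :
  all (fun x => x \in G) s -> all (fun x => x \in G) (merge_at i s).
Proof.
move=> H; rewrite /merge_at all_cat all_take' //= all_drop' // andbT.
by rewrite groupM // nth_inG.
Qed.

Lemma cob_ext (gT : finGroupType) (T : zmodType) (act : T -> gT -> T) (G : {group gT}) n f g s :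
  (forall t, size t = n -> all (fun x => x \in G) t -> f t = g t) ->
  size s = n.+1 -> all (fun x => x \in G) s -> coboundary act n f s = coboundary act n g s.
Proof.
move=> E Hs Ha; rewrite /coboundary E ?size_behead ?Hs ?all_behead' //.
rewrite (E (take n s)) ?size_take ?Hs ?ltnSn ?all_take' //; congr (_ + _ + _).
apply: eq_bigr => i _; move: (ltn_ord i) => Hi; rewrite E ?size_mergeat ?Hs ?all_merge //; lia.
Qed.

Lemma act0 (gT : finGroupType) (T : zmodType) (act : T -> gT -> T) (G : {group gT}) g :
  is_module act G -> g \in G -> act 0 g = 0.
Proof. by case=> H _ _ Hg; apply: (addrI (act 0 g)); rewrite -H // !addr0. Qed.
Lemma actN (gT : finGroupType) (T : zmodType) (act : T -> gT -> T) (G : {group gT}) g a :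
  is_module act G -> g \in G -> act (- a) g = - act a g.
Proof. by move=> Hm Hg; apply: (@addfN T (act^~ g) _ a) => x y; rewrite (actD Hm). Qed.
Lemma actMn (gT : finGroupType) (T : zmodType) (act : T -> gT -> T) (G : {group gT}) g a j :
  is_module act G -> g \in G -> act (a *+ j) g = act a g *+ j.
Proof. by move=> Hm Hg; apply: (@addfMn T (act^~ g) _ a) => x y; rewrite (actD Hm). Qed.
Lemma actMz (gT : finGroupType) (T : zmodType) (act : T -> gT -> T) (G : {group gT}) g a j :
  is_module act G -> g \in G -> act (a *~ j) g = act a g *~ j.
Proof. by move=> Hm Hg; apply: (@addfMz T (act^~ g) _ a) => x y; rewrite (actD Hm). Qed.
Lemma actB (gT : finGroupType) (T : zmodType) (act : T -> gT -> T) (G : {group gT}) g a b :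
  is_module act G -> g \in G -> act (a - b) g = act a g - act b g.
Proof. by move=> Hm Hg; rewrite (actD Hm) // (actN _ Hm). Qed.
Lemma act_sum (gT : finGroupType) (T : zmodType) (act : T -> gT -> T) (G : {group gT}) g
   (I : Type) (r : seq I) (Pr : pred I) (F : I -> T) :
  is_module act G -> g \in G -> act (\sum_(i <- r | Pr i) F i) g = \sum_(i <- r | Pr i) act (F i) g.
Proof. by move=> Hm Hg; apply: (@addf_sum T (act^~ g)) => a b; rewrite (actD Hm). Qed.


Lemma take_rcons' (T : Type) i (s : seq T) x : (i <= size s)%N -> take i (rcons s x) = take i s.
Proof.
move=> H; rewrite -cats1 take_cat; case: (ltnP i (size s)) => // H2.
have E : i = size s by lia.
by rewrite E subnn take0 cats0 take_size.
Qed.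

Lemma merge_rcons (gT : finGroupType) i (s : seq gT) x :
  (i.+1 < size s)%N -> merge_at i (rcons s x) = rcons (merge_at i s) x.
Proof.
move=> H; rewrite /merge_at drop_rcons // !nth_rcons take_rcons'; try lia.
by rewrite (_ : (i < size s)%N) ?H //= ?rcons_cat //; lia.
Qed.

Lemma merge_rcons_last (gT : finGroupType) k (s : seq gT) x :
  size s = k.+1 -> merge_at k (rcons s x) = rcons (take k s) (nth 1%g s k * x)%g.
Proof.
move=> H; rewrite /merge_at !nth_rcons take_rcons' ?H // ltnSn ltnn eqxx.
rewrite drop_oversize ?size_rcons ?H // cats1 //.
Qed.

Lemma behead_rcons (T : Type) (s : seq T) x : (0 < size s)%N -> behead (rcons s x) = rcons (behead s) x.
Proof. by case: s. Qed.
Lemma head_rcons (T : Type) (d : T) (s : seq T) x : (0 < size s)%N -> head d (rcons s x) = head d s.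
Proof. by case: s. Qed.
Lemma take_rcons_size (T : Type) (s : seq T) x k : size s = k -> take k (rcons s x) = s.
Proof. by move=> <-; rewrite take_rcons' // take_size. Qed.

Lemma sum_mulg (gT : finGroupType) (T : zmodType) (G : {group gT}) (F : gT -> T) a :
  a \in G -> \sum_(x in G) F (a * x)%g = \sum_(x in G) F x.
Proof.
move=> Ha; rewrite [RHS](reindex_inj (mulgI a)) /=.
by apply: eq_bigl => x; rewrite groupMl.
Qed.

Definition hsum (gT : finGroupType) (T : zmodType) (G : {group gT}) (f : seq gT -> T) : seq gT -> T :=
  fun s => \sum_(x in G) f (rcons s x).

Lemma cob_hsum (gT : finGroupType) (T : zmodType) (act : T -> gT -> T) (G : {group gT}) k f s :
  is_module act G -> size s = k.+1 -> all (fun x => x \in G) s ->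
  \sum_(x in G) coboundary act k.+1 f (rcons s x) =
  coboundary act k (hsum G f) s + (f s *~ (-1) ^+ k.+2) *+ #|G|.
Proof.
move=> Hm Hs Ha.
have s0 : (0 < size s)%N by rewrite Hs.
have hG := head_inG Ha.
rewrite /coboundary.
have Em : forall x, \sum_(i < k) f (merge_at i (rcons s x)) *~ (-1) ^+ i.+1 =
    \sum_(i < k) f (rcons (merge_at i s) x) *~ (-1) ^+ i.+1.
  by move=> x; apply: eq_bigr => i _; rewrite merge_rcons // Hs; have := ltn_ord i; lia.
under eq_bigr => x _ do rewrite behead_rcons // head_rcons // big_ord_recr /= Em merge_rcons_last //
  take_rcons_size //.
rewrite !big_split /= sumr_const; congr (_ + _).
rewrite /hsum (act_sum (G:=G)) ?groupV // -!addrA; congr (_ + _).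
rewrite exchange_big /= -mulrz_suml (sum_mulg (fun y => f (rcons (take k s) y))) ?nth_inG //.
congr (_ + _); apply: eq_bigr => i _; by rewrite mulrz_suml.
Qed.




Definition face (gT : finGroupType) (i : nat) (s : seq gT) : seq gT :=
  if i == 0%N then behead s else if (i < size s)%N then merge_at i.-1 s else take (size s).-1 s.

Lemma size_face (gT : finGroupType) i (s : seq gT) :
  (0 < size s)%N -> (i <= size s)%N -> size (face i s) = (size s).-1.
Proof.
move=> H1 H2; rewrite /face; case: eqP => Hi; first by rewrite size_behead.
case: ifP => H3; first by rewrite size_mergeat //; lia.
rewrite size_take; case: ifP => //; lia.
Qed.

Lemma nth_face (gT : finGroupType) i (s : seq gT) k :
  (i <= size s)%N -> (k < (size s).-1)%N ->
  nth 1%g (face i s) k = if (k.+1 < i)%N then nth 1%g s k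
     else if k.+1 == i then (nth 1%g s k * nth 1%g s k.+1)%g else nth 1%g s k.+1.
Proof.
move=> H1 H2; rewrite /face; case: eqP => Hi.
  by subst i; rewrite nth_behead.
case: ifP => H3.
  rewrite /merge_at nth_cat size_take.
  case: (ltnP i.-1 (size s)) => H4; last by lia.
  case: ifP => H5.
    rewrite nth_take //. case: ifP => //; lia.
  case E: (k - i.-1)%N => [|l] /=.
    have -> : k.+1 == i by apply/eqP; lia.
    case: ifP; last by move=> _; congr (_ * _)%g; congr nth; lia.
    lia.
  rewrite nth_drop; case: ifP; first by lia.
  case: ifP; first by lia.
  by move=> _ _; congr nth; lia.
rewrite nth_take //; case: ifP => //; lia.
Qed.

Lemma face_face (gT : finGroupType) i j (s : seq gT) :
  (1 < size s)%N -> (j < i)%N -> (i <= size s)%N -> face j (face i s) = face i.-1 (face j s).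
Proof.
move=> H1 H2 H3.
apply: (@eq_from_nth _ 1%g).
  rewrite !size_face ?size_face //; lia.
move=> k; rewrite !size_face ?size_face //; try lia.
move=> Hk.
rewrite nth_face ?size_face //; try lia.
rewrite [in RHS]nth_face ?size_face //; try lia.
rewrite !nth_face //; try lia.
by repeat case: ifP => ?; (try lia); rewrite ?mulgA.
Qed.


Definition coefA (gT : finGroupType) (T : zmodType) (act : T -> gT -> T) (i : nat) (s : seq gT) (t : T) : T :=
  if i == 0%N then act t ((head 1 s)^-1)%g else t.

Lemma cob_faces (gT : finGroupType) (T : zmodType) (act : T -> gT -> T) n f s :
  size s = n.+1 ->
  coboundary act n f s = \sum_(i < n.+2) coefA act i s (f (face i s)) *~ (-1) ^+ i.
Proof.
move=> Hs; rewrite big_ord_recl big_ord_recr /= /coboundary /coefA /face /= expr0 mulr1z.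
rewrite Hs ltnn /= addrA; congr (_ + _ + _).
by apply: eq_bigr => i _ /=; rewrite /bump /= add1n ltnS ltn_ord.
Qed.

Lemma double_cancel (T : zmodType) (X : nat -> nat -> T) M :
  (forall i j, (j < i)%N -> (i <= M)%N -> X i j = X j i.-1) ->
  \sum_(i < M.+1) \sum_(j < M) X i j *~ (-1) ^+ (i + j) = 0.
Proof.
elim: M => [|M IH] H; first by rewrite big1 // => i _; rewrite big_ord0.
rewrite big_ord_recr /=.
rewrite (eq_bigr (fun i : 'I_M.+1 => \sum_(j < M) X i j *~ (-1) ^+ (i + j) + X i M *~ (-1) ^+ (i + M)));
  last by move=> i _; rewrite big_ord_recr.
rewrite big_split /= IH; last by move=> i j Hij HiM; apply: H => //; lia.
rewrite add0r [X in _ + X = 0](eq_bigr (fun j : 'I_M.+1 => - (X j M *~ (-1) ^+ (j + M)))).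
  by rewrite sumrN addrN.
move=> j _; rewrite H //=.
by rewrite -mulrNz addSn addnC exprS mulN1r.
Qed.

Lemma coef_comm (gT : finGroupType) (T : zmodType) (act : T -> gT -> T) (G : {group gT}) s i j t :
  is_module act G -> all (fun x => x \in G) s -> (1 < size s)%N -> (j < i)%N -> (i <= size s)%N ->
  coefA act i s (coefA act j (face i s) t) = coefA act j s (coefA act i.-1 (face j s) t).
Proof.
move=> Hm Ha H1 H2 H3; rewrite /coefA.
have -> : (i == 0%N) = false by apply/eqP; lia.
case: (eqVneq j 0%N) => Hj; last first.
  by have -> : (i.-1 == 0%N) = false by apply/eqP; lia.
subst j; rewrite -!nth0 nth_face //; last by case: (size s) H1 => [|[|k]].
case: (ltnP 1 i) => Hi.
  by have -> : (i.-1 == 0%N) = false by apply/eqP; lia.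
have -> : i = 1%N by lia.
rewrite /= /face /= nth_behead /=.
have G0 := nth_inG 0 Ha; have G1 := nth_inG 1 Ha.
case: Hm => _ _ HM; rewrite -HM ?groupV //.
by rewrite invgM.
Qed.

Lemma coefA_add (gT : finGroupType) (T : zmodType) (act : T -> gT -> T) (G : {group gT}) i s :
  is_module act G -> head 1%g s \in G -> forall a b, coefA act i s (a + b) = coefA act i s a + coefA act i s b.
Proof. by move=> Hm Hh a b; rewrite /coefA; case: eqP => // _; rewrite (actD Hm) ?groupV. Qed.

Lemma cobcob (gT : finGroupType) (T : zmodType) (act : T -> gT -> T) (G : {group gT}) n f s :
  is_module act G -> size s = n.+2 -> all (fun x => x \in G) s ->
  coboundary act n.+1 (coboundary act n f) s = 0.
Proof.
move=> Hm Hs Ha; rewrite cob_faces //.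
pose X i j := coefA act i s (coefA act j (face i s) (f (face j (face i s)))).
have hG := head_inG Ha.
rewrite (eq_bigr (fun i : 'I_n.+3 => \sum_(j < n.+2) X i j *~ (-1) ^+ (i + j))).
  apply: double_cancel => i j Hji Hi.
  by rewrite /X (coef_comm (G:=G)) ?Hs // face_face ?Hs.
move=> i _; rewrite cob_faces; last by rewrite size_face Hs //; have := ltn_ord i; lia.
rewrite (addf_sum _ _ _ (coefA_add i Hm hG)) mulrz_suml.
by apply: eq_bigr => j _; rewrite (addfMz (coefA_add i Hm hG)) -mulrzA exprD mulrC.
Qed.


Lemma aux_int (x M q : int) : x + x = q*M + x -> 0 <= x -> x < M -> 0 < M -> x = 0.
Proof. move=> E H1 H2 H3. have E' : x = q * M by apply: (addIr x).
have : (q = 0) \/ (1 <= q) \/ (q <= -1) by lia.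
case=> [Hq|[Hq|Hq]].
- by rewrite Hq mul0r in E'.
- have : M <= q * M by rewrite -{1}(mul1r M) ler_pM2r. lia.
- have : q * M <= - M by rewrite -mulN1r ler_pM2r. lia.
Qed.

Lemma tf_p (p d : nat) (T : zmodType) : prime p -> iso_to_Zp_pow p d T ->
  forall u : T, u *+ p = 0 -> u = 0.
Proof.
move=> Hp [phi [Hv HD Hinj _]] u Hu.
have Mpos : forall k, (0 < (p ^ k)%:Z)%R.
  by move=> k; rewrite ltz_nat expn_gt0 prime_gt0.
have phi0 : forall k i, phi 0 k ord0 i = 0.
  move=> k i; have := HD 0 0 k i; rewrite addr0 => E.
  have /andP[/andP[H1 H2] _] := Hv 0 k i.
  apply: (aux_int _ H1 H2 (Mpos k)).
  by rewrite {3}E; apply: divz_eq.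
have phiMn : forall j k i, phi (u *+ j) k ord0 i = ((j%:Z * phi u k ord0 i) %% (p ^ k)%:Z)%Z.
  move=> j k i; elim: j => [|j IH]; first by rewrite mulr0n phi0 mul0r mod0z.
  rewrite mulrS HD IH modzDmr; congr (_ %% _)%Z.
  by rewrite -{1}(mul1r (phi u k ord0 i)) -mulrDl -PoszD add1n.
apply: Hinj; apply: functional_extensionality => k; apply/matrixP => a b.
rewrite (ord1 a) phi0.
have /andP[_ /eqP <-] := Hv u k b.
have := phiMn p k.+1 b; rewrite Hu phi0 expnS PoszM -mulz_modr ?ltz_nat ?prime_gt0 //.
move/eqP; rewrite eq_sym mulf_eq0 eqz_nat; case: eqP => [p0|_ /eqP //]; by move: Hp; rewrite p0.
Qed.

Lemma tf_pow (p d : nat) (T : zmodType) : prime p -> iso_to_Zp_pow p d T ->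
  forall j (u : T), u *+ (p ^ j) = 0 -> u = 0.
Proof.
move=> Hp Hi; elim=> [|j IH] u; first by rewrite expn0 mulr1n.
by rewrite expnSr mulrnA => /(tf_p Hp Hi) /IH.
Qed.

Lemma tf_cancel (p d : nat) (T : zmodType) : prime p -> iso_to_Zp_pow p d T ->
  forall j (u v : T), u *+ (p ^ j) = v *+ (p ^ j) -> u = v.
Proof.
move=> Hp Hi j u v E; apply/eqP; rewrite -subr_eq0; apply/eqP.
by apply: (tf_pow Hp Hi (j:=j)); rewrite mulrnBl E subrr.
Qed.


Lemma nth_map1 (gT : finGroupType) (c : gT -> gT) s i :
  c 1%g = 1%g -> nth 1%g (map c s) i = c (nth 1%g s i).
Proof.
move=> c1; case: (ltnP i (size s)) => H; first by rewrite (nth_map 1%g).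
by rewrite !nth_default ?size_map.
Qed.

Lemma map_merge (gT : finGroupType) (c : gT -> gT) i s :
  c 1%g = 1%g -> {morph c : x y / (x * y)%g} -> map c (merge_at i s) = merge_at i (map c s).
Proof.
move=> c1 cM; rewrite /merge_at map_cat map_take /= map_drop !nth_map1 //.
by rewrite cM.
Qed.

Lemma cob_act (gT : finGroupType) (T : zmodType) (act : T -> gT -> T) (G : {group gT}) g n f s :
  is_module act G -> g \in G -> all (fun x => x \in G) s ->
  coboundary act n (cohom_act act g f) s = cohom_act act g (coboundary act n f) s.
Proof.
move=> Hm Hg Ha; set c := fun x => (x ^ g^-1)%g.
have c1 : c 1%g = 1%g by rewrite /c conj1g.
have cM : {morph c : x y / (x * y)%g} by move=> x y; rewrite /c conjMg.
have hG := head_inG Ha.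
rewrite /cohom_act /coboundary (actD Hm) // (actD Hm) // (act_sum (G:=G)) // !(actMz _ _ Hm) //.
rewrite map_take behead_map; congr (_ + _ + _); last first.
  by apply: eq_bigr => i _; rewrite (actMz _ _ Hm) // map_merge.
have -> : head 1%g [seq (x ^ g^-1)%g | x <- s] = c (head 1%g s) by case: s {Ha hG}.
case: Hm => _ _ HM; rewrite -!HM ?groupV ?groupJ ?groupV //; congr (act _ _).
by rewrite /c -conjVg conjgE invgK -!mulgA mulVg mulg1.
Qed.


Lemma choose_mult (gT : finGroupType) (T : zmodType) (G : {group gT}) (N n : nat) (f : seq gT -> T) :
  cochain_on G (multiples T N) n f ->
  exists w : seq gT -> T, forall s, size s = n -> all (fun x => x \in G) s -> f s = w s *+ N.
Proof.
move=> H; exists (fun s => epsilon (inhabits 0) (fun u => f s = u *+ N)).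
move=> s Hs Ha; exact: (epsilon_spec (inhabits 0) (fun u => f s = u *+ N) (H s Hs Ha)).
Qed.

Lemma cob_neg (gT : finGroupType) (T : zmodType) (act : T -> gT -> T) (G : {group gT}) n f s :
  is_module act G -> head 1%g s \in G ->
  coboundary act n (fun t => - f t) s = - coboundary act n f s.
Proof.
move=> Hm Hh; apply: cob_morph => [a b|t]; first by rewrite opprD.
by rewrite (actN _ Hm) ?groupV.
Qed.

Lemma cob_sub (gT : finGroupType) (T : zmodType) (act : T -> gT -> T) (G : {group gT}) n f g s :
  is_module act G -> head 1%g s \in G ->
  coboundary act n (cdiff f g) s = coboundary act n f s - coboundary act n g s.
Proof.
by move=> Hm Hh; rewrite /cdiff (cob_add (G:=G)) // (cob_neg (G:=G)).
Qed.

Lemma cob_mulrn (gT : finGroupType) (T : zmodType) (act : T -> gT -> T) (G : {group gT}) n f s j :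
  is_module act G -> head 1%g s \in G ->
  coboundary act n (fun t => f t *+ j) s = coboundary act n f s *+ j.
Proof.
move=> Hm Hh; apply: (@cob_morph _ _ act (fun x => x *+ j)) => [a b|t]; first by rewrite mulrnDl.
by rewrite (actMn _ _ Hm) ?groupV.
Qed.

Lemma cob_mulrz (gT : finGroupType) (T : zmodType) (act : T -> gT -> T) (G : {group gT}) n f s j :
  is_module act G -> head 1%g s \in G ->
  coboundary act n (fun t => f t *~ j) s = coboundary act n f s *~ j.
Proof.
move=> Hm Hh; apply: (@cob_morph _ _ act (fun x => x *~ j)) => [a b|t]; first by rewrite mulrzDl.
by rewrite (actMz _ _ Hm) ?groupV.
Qed.

Lemma cob0 (gT : finGroupType) (T : zmodType) (act : T -> gT -> T) (G : {group gT}) n s :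
  is_module act G -> head 1%g s \in G -> coboundary act n (fun _ => 0) s = 0.
Proof.
move=> Hm Hh; rewrite /coboundary (act0 Hm) ?groupV // big1 ?mul0rz ?addr0 // => i _.
by rewrite mul0rz.
Qed.

Lemma triv0 (gT : finGroupType) (T : zmodType) (act : T -> gT -> T) (G : {group gT}) (A B : T -> Prop) k f :
  is_module act G -> A 0 -> cochain_on G B k.+1 f -> cohom_trivial act G A B k.+1 f.
Proof.
move=> Hm A0 Hf; exists (fun _ => 0); split => // s Hs Ha.
by rewrite /cdiff (cob0 (G:=G)) ?head_inG // subr0; apply: Hf.
Qed.

Lemma mult0 (T : zmodType) N : multiples T N 0.
Proof. by exists 0; rewrite mul0rn. Qed.
Lemma multD (T : zmodType) N a b : multiples T N a -> multiples T N b -> multiples T N (a + b).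
Proof. by move=> [u ->] [v ->]; exists (u + v); rewrite mulrnDl. Qed.
Lemma multN (T : zmodType) N a : multiples T N a -> multiples T N (- a).
Proof. by move=> [u ->]; exists (- u); rewrite mulNrn. Qed.
Lemma multB (T : zmodType) N a b : multiples T N a -> multiples T N b -> multiples T N (a - b).
Proof. by move=> Ha Hb; apply: multD => //; apply: multN. Qed.
Lemma multMn (T : zmodType) N u : multiples T N (u *+ N).
Proof. by exists u. Qed.

Lemma all_rcons' (T : Type) (a : pred T) s x : all a s -> a x -> all a (rcons s x).
Proof. by rewrite -cats1 all_cat /= => -> ->. Qed.

Lemma mulrnz (T : zmodType) (x : T) N z : (x *+ N) *~ z = (x *~ z) *+ N.
Proof. by elim: N => [|N IH]; rewrite ?mulr0n ?mul0rz // !mulrS mulrzDl IH. Qed.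

Definition cN (gT : finGroupType) (T : zmodType) (G : {group gT}) (k : nat) (f : seq gT -> T) :=
  fun s => hsum G f s *~ (-1) ^+ k.+1.

Lemma sign_aux k : ((-1) ^+ k.+2 * (-1) ^+ k.+1 = - 1 :> int)%R.
Proof. rewrite exprS mulN1r mulNr -expr2 -exprM mulnC exprM sqrrN. by rewrite (_ : (1 : int) ^+ 2 = 1) // expr1n. Qed.

Lemma ann (gT : finGroupType) (T : zmodType) (act : T -> gT -> T) (G : {group gT}) k f :
  is_module act G ->
  (forall s, size s = k.+2 -> all (fun x => x \in G) s -> coboundary act k.+1 f s = 0) ->
  forall s, size s = k.+1 -> all (fun x => x \in G) s ->
    f s *+ #|G| = coboundary act k (cN G k f) s.
Proof.
move=> Hm Hf s Hs Ha.
have := cob_hsum f Hm Hs Ha.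
rewrite big1 => [E|x Hx]; last by apply: Hf; rewrite ?size_rcons ?Hs // all_rcons'.
rewrite /cN (cob_mulrz (G:=G)) ?head_inG //.
have -> : coboundary act k (hsum G f) s = - (f s *~ (-1) ^+ k.+2 *+ #|G|).
  by apply/eqP; rewrite -addr_eq0 -E.
by rewrite mulNrz mulrnz -mulrzA sign_aux mulrN1z mulNrn opprK.
Qed.


Lemma cocycle_from_w (gT : finGroupType) (T : zmodType) (act : T -> gT -> T) (G : {group gT}) (q : nat) k z w :
  is_module act G -> (forall u : T, u *+ q = 0 -> u = 0) ->
  (forall s, size s = k.+2 -> all (fun x => x \in G) s -> coboundary act k.+1 z s = w s *+ q) ->
  forall s, size s = k.+3 -> all (fun x => x \in G) s -> coboundary act k.+2 w s = 0.
Proof.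
move=> Hm tfq Hw s Hs Ha; apply: tfq.
rewrite -(cob_mulrn (G:=G)) ?head_inG //.
rewrite (@cob_ext _ _ act G k.+2 _ (coboundary act k.+1 z)) //; first exact: (cobcob (G:=G)).
by move=> t Ht Hta; rewrite Hw.
Qed.

Lemma part1 (gT : finGroupType) (T : zmodType) (act : T -> gT -> T) (G : {group gT}) (p r m k : nat) :
  is_module act G -> #|G| = (p ^ m)%N -> (p ^ r = p ^ m * p ^ (r - m))%N ->
  (forall u : T, u *+ (p ^ r) = 0 -> u = 0) ->
  forall z, cocycle act G (fullT T) (multiples T (p ^ r)) k.+1 z ->
         exists a b, [/\ Im_pro act p r G k.+1 a, Im_inc act p r m G k.+1 b &
           cohom_trivial act G (fullT T) (multiples T (p ^ r)) k.+1 (cdiff z (cadd a b))].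
Proof.
move=> Hm HN Hq tfq z [_ Hz].
have [w Hw] := choose_mult Hz.
have Hw0 := cocycle_from_w Hm tfq Hw.
have EA := ann Hm Hw0.
set b := fun s => cN G k.+1 w s *+ p ^ (r - m).
have Hb : forall s, size s = k.+2 -> all (fun x => x \in G) s -> coboundary act k.+1 b s = w s *+ p ^ r.
  move=> s Hs Ha; rewrite (cob_mulrn (G:=G)) ?head_inG // -EA // HN Hq mulrnA //.
have H0 : forall f, cohom_trivial act G (fullT T) (multiples T (p ^ r)) k.+1 (cdiff f f).
  by move=> f; apply: triv0 => // s _ _; rewrite /cdiff subrr; apply: mult0.
exists (cdiff z b), b; split.
- have Ha : forall s, size s = k.+2 -> all (fun x => x \in G) s -> coboundary act k.+1 (cdiff z b) s = 0.
    by move=> s Hs Ha; rewrite (cob_sub (G:=G)) ?head_inG // Hb // Hw // subrr.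
  split; first by split => // s Hs Has; rewrite Ha //; apply: mult0.
  exists (cdiff z b) => //; split => // s Hs Has; exact: Ha.
- split; first by split => // s Hs Has; rewrite Hb //; apply: multMn.
  exists b => //; split => s Hs Has; [exact: multMn | rewrite Hb //; exact: multMn].
- apply: triv0 => // s _ _; rewrite /cdiff /cadd subrK subrr; apply: mult0.
Qed.


Lemma id1 (T : zmodType) (z a b x1 x2 : T) : a - b - (x2 - x1) = (z - b - x2) - (z - a - x1).
Proof. rewrite !opprD !opprK !addrA [RHS](@GRing.add T).[ACl ((1*4)*5*2*3*6)]. by rewrite subrr add0r. Qed.
Lemma id2 (T : zmodType) (z b y x2 : T) : z - (b + y + x2) = (z - b - x2) - y.
Proof. by rewrite !opprD !addrA [RHS](@GRing.add T).[ACl (1*2*4*3)]. Qed.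

Lemma part2 (gT : finGroupType) (T : zmodType) (act : T -> gT -> T) (G : {group gT}) (p r m k : nat) :
  is_module act G -> #|G| = (p ^ m)%N -> (p ^ r = p ^ m * p ^ (r - m))%N ->
  (p ^ (r - m) = p ^ m * p ^ (r - m - m))%N ->
  (forall u v : T, u *+ (p ^ (r - m)) = v *+ (p ^ (r - m)) -> u = v) ->
  (forall u : T, u *+ (p ^ r) = 0 -> u = 0) ->
  forall z, Im_pro act p r G k.+1 z -> Im_inc act p r m G k.+1 z ->
         cohom_trivial act G (fullT T) (multiples T (p ^ r)) k.+1 z.
Proof.
move=> Hm HN Hq He tfe tfq z [_ [a [_ Ha0] [g1 [_ Hg1]]]] [_ [b [Hbv Hbd] [g2 [_ Hg2]]]].
have [b' Hb'] := choose_mult Hbv.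
have [w Hw] := choose_mult Hbd.
have [y1 Hy1] := choose_mult Hg1.
have [y2 Hy2] := choose_mult Hg2.
set g := cdiff g2 g1; set y := cdiff y2 y1.
have HD : forall s, size s = k.+1 -> all (fun x => x \in G) s ->
    cdiff (cdiff a b) (coboundary act k g) s = y s *+ p ^ r.
  move=> s Hs Ha; rewrite /cdiff (cob_sub (G:=G)) ?head_inG // (id1 (z s)).
  move: (Hy1 s Hs Ha) (Hy2 s Hs Ha); rewrite /cdiff => -> ->.
  by rewrite /y /cdiff mulrnBl.
have Hwy : forall s, size s = k.+2 -> all (fun x => x \in G) s -> w s = - coboundary act k.+1 y s.
  move=> s Hs Ha.
  have := @cob_ext _ _ act G k.+1 _ (fun t => y t *+ p ^ r) s HD Hs Ha.
  rewrite (cob_mulrn (G:=G)) ?head_inG // !(cob_sub (G:=G)) ?head_inG //.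
  rewrite (cobcob (G:=G)) // Hw // Ha0 // sub0r subr0 => /eqP.
  move/eqP=> E; apply/eqP; rewrite -addr_eq0; apply/eqP; apply: tfq.
  by rewrite mulrnDl -E subrr.
have Hb'd : forall s, size s = k.+2 -> all (fun x => x \in G) s ->
    coboundary act k.+1 b' s = w s *+ p ^ m.
  move=> s Hs Ha; apply: tfe.
  rewrite -(cob_mulrn (G:=G)) ?head_inG // -(@cob_ext _ _ act G k.+1 b) //.
  by rewrite Hw // Hq mulrnA.
set u := fun s => b' s + y s *+ p ^ m.
have Hu0 : forall s, size s = k.+2 -> all (fun x => x \in G) s -> coboundary act k.+1 u s = 0.
  move=> s Hs Ha; rewrite /u (cob_add (G:=G)) ?head_inG // (cob_mulrn (G:=G)) ?head_inG //.
  by rewrite Hb'd // Hwy // mulNrn addNr.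
have EA := ann Hm Hu0.
exists (fun s => cN G k u s *+ p ^ (r - m - m) + g2 s); split => // s Hs Ha.
rewrite /cdiff (cob_add (G:=G)) ?head_inG // (cob_mulrn (G:=G)) ?head_inG // -EA // HN.
rewrite -mulrnA -He /u mulrnDl -Hb' // -mulrnA -Hq id2.
apply: multB; last exact: multMn.
by move: (Hy2 s Hs Ha); rewrite /cdiff => ->; apply: multMn.
Qed.


Lemma triv_self (gT : finGroupType) (T : zmodType) (act : T -> gT -> T) (G : {group gT}) (A : T -> Prop) N k f :
  is_module act G -> A 0 -> cohom_trivial act G A (multiples T N) k.+1 (cdiff f f).
Proof. by move=> Hm A0; apply: triv0 => // s _ _; rewrite /cdiff subrr; apply: mult0. Qed.

Lemma triv_neg (gT : finGroupType) (T : zmodType) (act : T -> gT -> T) (G : {group gT}) N k f g :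
  is_module act G -> cohom_trivial act G (fullT T) (multiples T N) k.+1 (cdiff f g) ->
  cohom_trivial act G (fullT T) (multiples T N) k.+1 (cdiff g f).
Proof.
move=> Hm [h [_ Hh]]; exists (fun s => - h s); split => // s Hs Ha.
rewrite /cdiff (cob_neg (G:=G)) ?head_inG //.
have -> : g s - f s - - coboundary act k h s = - (f s - g s - coboundary act k h s).
  by rewrite !opprB opprK addrC.
by apply: multN; apply: Hh.
Qed.

Lemma part3 (gT : finGroupType) (T : zmodType) (act : T -> gT -> T) (G : {group gT}) (p r m k : nat) :
  is_module act G -> #|G| = (p ^ m)%N -> (p ^ r = p ^ m * p ^ (r - m))%N ->
  (forall u : T, u *+ (p ^ r) = 0 -> u = 0) ->
  subquot_iso (cocycle act G (fullT T) (zeroT T) k.+1)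
              (cohom_trivial act G (fullT T) (zeroT T) k.+1)
              (Im_pro act p r G k.+1)
              (cohom_trivial act G (fullT T) (multiples T (p ^ r)) k.+1).
Proof.
move=> Hm HN Hq tfq; exists id; split.
- move=> f [_ Hf]; split.
    by split => // s Hs Ha; rewrite /= (Hf s Hs Ha); apply: mult0.
  by exists f; [split | apply: triv_self].
- move=> f g [_ Hf] [_ Hg]; split.
    move=> [h [_ Hh]]; exists h; split => // s Hs Ha.
    by rewrite (Hh s Hs Ha); apply: mult0.
  move=> [h [_ Hh]].
  have [y Hy] := choose_mult Hh.
  have Hy0 : forall s, size s = k.+2 -> all (fun x => x \in G) s -> coboundary act k.+1 y s = 0.
    move=> s Hs Ha; apply: tfq.
    rewrite -(cob_mulrn (G:=G)) ?head_inG // -(@cob_ext _ _ act G k.+1 _ _ s Hy) //.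
    rewrite !(cob_sub (G:=G)) ?head_inG // (cobcob (G:=G)) //.
    by rewrite (Hf s Hs Ha) (Hg s Hs Ha) !subrr.
  have EA := ann Hm Hy0.
  exists (fun s => h s + cN G k y s *+ p ^ (r - m)); split => // s Hs Ha.
  rewrite /zeroT /cdiff (cob_add (G:=G)) ?head_inG // (cob_mulrn (G:=G)) ?head_inG // -EA //.
  rewrite HN -mulrnA -Hq opprD addrA.
  by move: (Hy s Hs Ha); rewrite /cdiff => ->; rewrite subrr.
- move=> f g _ _; apply: triv_self => //.
- move=> z [Hz [f Hf Hzf]]; exists f => //.
  exact: triv_neg.
Qed.


Lemma sign_sq n : ((-1) ^+ n * (-1) ^+ n = 1 :> int)%R.
Proof. by rewrite -expr2 -exprM mulnC exprM sqrrN (_ : (1 : int) ^+ 2 = 1) // expr1n. Qed.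

Lemma id3 (T : zmodType) (U B Z X : T) : (U + B - Z) - (U + - X) = - (Z - B - X).
Proof. rewrite !opprD !opprK !addrA [LHS](@GRing.add T).[ACl ((1*4)*3*2*5)]. by rewrite subrr add0r. Qed.

Lemma id3' (T : zmodType) (U B Z X : T) : (U - Z) - ((U - B) + - X) = - (Z - B - X).
Proof. rewrite !opprD !opprK !addrA [LHS](@GRing.add T).[ACl ((1*3)*2*4*5)]. by rewrite subrr add0r. Qed.

Definition phi4 (gT : finGroupType) (T : zmodType) (G : {group gT}) (k e : nat) (w : seq gT -> T) :=
  fun s => cN G k.+1 w s *+ e.

Lemma part4 (gT : finGroupType) (T : zmodType) (act : T -> gT -> T) (G : {group gT}) (p r m k : nat) :
  is_module act G -> #|G| = (p ^ m)%N -> (p ^ r = p ^ m * p ^ (r - m))%N ->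
  (p ^ (r - m) = p ^ m * p ^ (r - m - m))%N ->
  (forall u v : T, u *+ (p ^ (r - m)) = v *+ (p ^ (r - m)) -> u = v) ->
  (forall u : T, u *+ (p ^ r) = 0 -> u = 0) ->
  subquot_iso (cocycle act G (fullT T) (zeroT T) k.+2)
              (cohom_trivial act G (fullT T) (zeroT T) k.+2)
              (Im_inc act p r m G k.+1)
              (cohom_trivial act G (fullT T) (multiples T (p ^ r)) k.+1).
Proof.
move=> Hm HN Hq He tfe tfq.
have Hphi : forall w, cochain_on G (zeroT T) k.+3 (coboundary act k.+2 w) ->
    forall s, size s = k.+2 -> all (fun x => x \in G) s ->
      coboundary act k.+1 (phi4 G k (p ^ (r - m)) w) s = w s *+ p ^ r.
  move=> w Hw0 s Hs Ha; rewrite /phi4 (cob_mulrn (G:=G)) ?head_inG //.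
  by rewrite -(ann Hm Hw0) // HN Hq mulrnA.
exists (phi4 G k (p ^ (r - m))); split.
- move=> w [_ Hw0]; split.
    by split => // s Hs Ha; rewrite Hphi //; apply: multMn.
  exists (phi4 G k (p ^ (r - m)) w); last exact: triv_self.
  by split => s Hs Ha; [apply: multMn | rewrite Hphi //; apply: multMn].
- move=> w1 w2 [_ Hw1] [_ Hw2].
  have -> : cdiff (phi4 G k (p ^ (r - m)) w1) (phi4 G k (p ^ (r - m)) w2) =
            phi4 G k (p ^ (r - m)) (cdiff w1 w2).
    apply: functional_extensionality => s.
    by rewrite /cdiff /phi4 /cN /hsum sumrB mulrzBl mulrnBl.
  set w := cdiff w1 w2.
  have Hw0 : cochain_on G (zeroT T) k.+3 (coboundary act k.+2 w).
    move=> s Hs Ha; rewrite /zeroT (cob_sub (G:=G)) ?head_inG //.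
    by rewrite (Hw1 s Hs Ha) (Hw2 s Hs Ha) subrr.
  split.
    move=> [y [_ Hy]].
    exists (fun s => hsum G y s *~ (-1) ^+ k.+2 *+ p ^ (r - m)); split => // s Hs Ha.
    rewrite /cdiff /phi4 /cN.
    have -> : hsum G w s = \sum_(x in G) coboundary act k.+1 y (rcons s x).
      apply: eq_bigr => x Hx; apply/eqP; rewrite -subr_eq0; apply/eqP.
      by apply: Hy; rewrite ?size_rcons ?Hs // all_rcons'.
    rewrite (cob_hsum _ Hm Hs Ha) (cob_mulrn (G:=G)) ?head_inG // (cob_mulrz (G:=G)) ?head_inG //.
    rewrite mulrzDl mulrnDl addrAC subrr add0r mulrnz -mulrzA sign_sq mulr1z HN -mulrnA -Hq.
    exact: multMn.
  move=> [g [_ Hg]].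
  have [y Hy] := choose_mult Hg.
  exists y; split => // s Hs Ha; rewrite /zeroT /cdiff.
  apply: tfq; rewrite mulrnBl; apply/eqP; rewrite subr_eq0; apply/eqP.
  have := @cob_ext _ _ act G k.+1 _ _ s Hy Hs Ha.
  rewrite (cob_mulrn (G:=G)) ?head_inG // (cob_sub (G:=G)) ?head_inG // (cobcob (G:=G)) // subr0.
  by rewrite Hphi.
- move=> w1 w2 _ _; apply: triv0 => // s _ _.
  rewrite /cdiff /cadd /phi4 /cN /hsum.
  under eq_bigr => x _ do rewrite /=.
  by rewrite big_split /= mulrzDl mulrnDl subrr; apply: mult0.
- move=> z [Hz [b [Hbv Hbd] [g2 [_ Hg2]]]].
  have [b' Hb'] := choose_mult Hbv.
  have [w Hw] := choose_mult Hbd.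
  have Hw0 := cocycle_from_w Hm tfq Hw.
  exists w; first by split.
  have EAw := ann Hm Hw0.
  have Hb'd : forall s, size s = k.+2 -> all (fun x => x \in G) s ->
      coboundary act k.+1 b' s = w s *+ p ^ m.
    move=> s Hs Ha; apply: tfe.
    rewrite -(cob_mulrn (G:=G)) ?head_inG // -(@cob_ext _ _ act G k.+1 b) //.
    by rewrite Hw // Hq mulrnA.
  set u := cdiff (cN G k.+1 w) b'.
  have Hu0 : forall s, size s = k.+2 -> all (fun x => x \in G) s -> coboundary act k.+1 u s = 0.
    by move=> s Hs Ha; rewrite /u (cob_sub (G:=G)) ?head_inG // -EAw // Hb'd // HN subrr.
  have EA := ann Hm Hu0.
  exists (fun s => cN G k u s *+ p ^ (r - m - m) + - g2 s); split => // s Hs Ha.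
  rewrite /cdiff (cob_add (G:=G)) ?head_inG // (cob_neg (G:=G)) ?head_inG //.
  rewrite (cob_mulrn (G:=G)) ?head_inG // -EA // HN -mulrnA -He /u /cdiff mulrnBl -Hb' //.
  rewrite /phi4 id3'; apply: multN.
  by move: (Hg2 s Hs Ha); rewrite /cdiff.
Qed.


Lemma con_sub (gT : finGroupType) (T : zmodType) (Q G : {group gT}) (A : T -> Prop) n f :
  Q \subset G -> cochain_on G A n f -> cochain_on Q A n f.
Proof.
move=> sQG H s Hs Ha; apply: H Hs _; apply/allP => x /(allP Ha); exact: (subsetP sQG).
Qed.

Lemma Im_pro_sub (gT : finGroupType) (T : zmodType) (act : T -> gT -> T) (Q G : {group gT}) p r k z :
  Q \subset G -> Im_pro act p r G k.+1 z -> Im_pro act p r Q k.+1 z.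
Proof.
move=> sQG [[H1 H2] [f [H3 H4] [h [H5 H6]]]].
split; first by split; apply: con_sub sQG _.
exists f; first by split; apply: con_sub sQG _.
by exists h; split; apply: con_sub sQG _.
Qed.

Lemma Im_inc_sub (gT : finGroupType) (T : zmodType) (act : T -> gT -> T) (Q G : {group gT}) p r m k z :
  Q \subset G -> Im_inc act p r m G k.+1 z -> Im_inc act p r m Q k.+1 z.
Proof.
move=> sQG [[H1 H2] [f [H3 H4] [h [H5 H6]]]].
split; first by split; apply: con_sub sQG _.
exists f; first by split; apply: con_sub sQG _.
by exists h; split; apply: con_sub sQG _.
Qed.

Lemma conj_mem (gT : finGroupType) (Q P : {group gT}) g s :
  Q \subset P -> g \in P -> all (fun x => x \in (Q :^ g)%G) s ->
  all (fun x => x \in Q) (map (fun x => x ^ g^-1)%g s) /\ all (fun x => x \in P) s.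
Proof.
move=> sQP Hg Ha; split.
  by rewrite all_map; apply/allP => x /(allP Ha) /=; rewrite mem_conjg.
apply/allP => x /(allP Ha); rewrite mem_conjg => /(subsetP sQP) H.
by rewrite -(conjgKV g x) groupJ.
Qed.

Lemma con_act (gT : finGroupType) (T : zmodType) (act : T -> gT -> T) (Q P : {group gT}) (A : T -> Prop) g n f :
  Q \subset P -> g \in P -> (forall t, A t -> A (act t g)) ->
  cochain_on Q A n f -> cochain_on (Q :^ g)%G A n (cohom_act act g f).
Proof.
move=> sQP Hg HA H s Hs Ha; have [H1 _] := conj_mem sQP Hg Ha.
by apply: HA; apply: H => //; rewrite size_map.
Qed.

Lemma cocycle_act (gT : finGroupType) (T : zmodType) (act : T -> gT -> T) (Q P : {group gT}) (A B : T -> Prop) g n f :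
  is_module act P -> Q \subset P -> g \in P -> (forall t, A t -> A (act t g)) -> (forall t, B t -> B (act t g)) ->
  cocycle act Q A B n f -> cocycle act (Q :^ g)%G A B n (cohom_act act g f).
Proof.
move=> Hm sQP Hg HA HB [H1 H2]; split; first exact: (con_act sQP Hg HA H1).
move=> s Hs Ha; have [H3 H4] := conj_mem sQP Hg Ha.
rewrite (cob_act (G:=P)) //; apply: HB; apply: H2 => //; by rewrite size_map.
Qed.

Lemma triv_act (gT : finGroupType) (T : zmodType) (act : T -> gT -> T) (Q P : {group gT}) (A B : T -> Prop) g k f :
  is_module act P -> Q \subset P -> g \in P -> (forall t, A t -> A (act t g)) -> (forall t, B t -> B (act t g)) ->
  cohom_trivial act Q A B k.+1 f -> cohom_trivial act (Q :^ g)%G A B k.+1 (cohom_act act g f).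
Proof.
move=> Hm sQP Hg HA HB [h [H1 H2]]; exists (cohom_act act g h); split; first exact: (con_act sQP Hg HA H1).
move=> s Hs Ha; have [H3 H4] := conj_mem sQP Hg Ha.
rewrite /cdiff (cob_act (G:=P)) // /cohom_act -(actB _ _ Hm) //.
by apply: HB; apply: H2 => //; rewrite size_map.
Qed.

Lemma cdiff_act (gT : finGroupType) (T : zmodType) (act : T -> gT -> T) (P : {group gT}) g z f :
  is_module act P -> g \in P ->
  cdiff (cohom_act act g z) (cohom_act act g f) = cohom_act act g (cdiff z f).
Proof.
move=> Hm Hg; apply: functional_extensionality => s.
by rewrite /cdiff /cohom_act (actB _ _ Hm).
Qed.

Lemma pres_full (gT : finGroupType) (T : zmodType) (act : T -> gT -> T) g t : fullT T t -> fullT T (act t g).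
Proof. by []. Qed.
Lemma pres_zero (gT : finGroupType) (T : zmodType) (act : T -> gT -> T) (P : {group gT}) g t :
  is_module act P -> g \in P -> zeroT T t -> zeroT T (act t g).
Proof. by move=> Hm Hg ->; rewrite /zeroT (act0 Hm). Qed.
Lemma pres_mult (gT : finGroupType) (T : zmodType) (act : T -> gT -> T) (P : {group gT}) N g t :
  is_module act P -> g \in P -> multiples T N t -> multiples T N (act t g).
Proof. by move=> Hm Hg [u ->]; exists (act u g); rewrite (actMn _ _ Hm). Qed.

Lemma Im_pro_act (gT : finGroupType) (T : zmodType) (act : T -> gT -> T) (Q P : {group gT}) p r k g z :
  is_module act P -> Q \subset P -> g \in P ->
  Im_pro act p r Q k.+1 z -> Im_pro act p r (Q :^ g)%G k.+1 (cohom_act act g z).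
Proof.
move=> Hm sQP Hg [H1 [f H2 H3]].
have pf := @pres_full gT T act g; have pz := pres_zero Hm Hg; have pm := pres_mult (N := p ^ r) Hm Hg.
split; first exact: (cocycle_act Hm sQP Hg pf pm H1).
exists (cohom_act act g f); first exact: (cocycle_act Hm sQP Hg pf pz H2).
rewrite (cdiff_act _ _ Hm) //; exact: (triv_act Hm sQP Hg pf pm H3).
Qed.

Lemma Im_inc_act (gT : finGroupType) (T : zmodType) (act : T -> gT -> T) (Q P : {group gT}) p r m k g z :
  is_module act P -> Q \subset P -> g \in P ->
  Im_inc act p r m Q k.+1 z -> Im_inc act p r m (Q :^ g)%G k.+1 (cohom_act act g z).
Proof.
move=> Hm sQP Hg [H1 [f H2 H3]].
have pf := @pres_full gT T act g; have pm := pres_mult (N := p ^ r) Hm Hg.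
have pe := pres_mult (N := p ^ (r - m)) Hm Hg.
split; first exact: (cocycle_act Hm sQP Hg pf pm H1).
exists (cohom_act act g f); first exact: (cocycle_act Hm sQP Hg pe pm H2).
rewrite (cdiff_act _ _ Hm) //; exact: (triv_act Hm sQP Hg pf pm H3).
Qed.

Local Close Scope ring_scope.

Theorem theorem4p1 (p m d : nat) (gT : finGroupType) (P : {group gT})
    (T : zmodType) (act : T -> gT -> T) (n r : nat) :
  prime p -> #|P| = (p ^ m)%N -> iso_to_Zp_pow p d T -> is_module act P ->
  (1 <= n)%N -> (2 * m <= r)%N ->
  [/\ (* H^n(P,T/p^rT) = Image(pro_r) + Image(inc_{r,m}) *)
      (forall z, cocycle act P (fullT T) (multiples T (p ^ r)) n z ->
         exists a b, [/\ Im_pro act p r P n a, Im_inc act p r m P n b &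
           cohom_trivial act P (fullT T) (multiples T (p ^ r)) n (cdiff z (cadd a b))]),
      (* the sum is direct *)
      (forall z, Im_pro act p r P n z -> Im_inc act p r m P n z ->
         cohom_trivial act P (fullT T) (multiples T (p ^ r)) n z),
      (* Image(pro_r) ~= H^n(P,T) *)
      subquot_iso (cocycle act P (fullT T) (zeroT T) n)
                  (cohom_trivial act P (fullT T) (zeroT T) n)
                  (Im_pro act p r P n)
                  (cohom_trivial act P (fullT T) (multiples T (p ^ r)) n),
      (* Image(inc_{r,m}) ~= H^{n+1}(P,T) *)
      subquot_iso (cocycle act P (fullT T) (zeroT T) n.+1)
                  (cohom_trivial act P (fullT T) (zeroT T) n.+1)
                  (Im_inc act p r m P n)
                  (cohom_trivial act P (fullT T) (multiples T (p ^ r)) n) &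
      (* naturality: restriction to subgroups Q of P and the action of P *)
      forall Q : {group gT}, Q \subset P ->
        [/\ forall z, Im_pro act p r P n z -> Im_pro act p r Q n z,
            forall z, Im_inc act p r m P n z -> Im_inc act p r m Q n z,
            forall g z, g \in P -> Im_pro act p r Q n z ->
                        Im_pro act p r (Q :^ g)%G n (cohom_act act g z) &
            forall g z, g \in P -> Im_inc act p r m Q n z ->
                        Im_inc act p r m (Q :^ g)%G n (cohom_act act g z)]].
Proof.
Proof.
move=> Hp HP Hiso Hm Hn Hr.
case: n Hn => [//|k] _.
have Hq : (p ^ r = p ^ m * p ^ (r - m))%N by rewrite -expnD; congr expn; lia.
have He : (p ^ (r - m) = p ^ m * p ^ (r - m - m))%N by rewrite -expnD; congr expn; lia.
have tfe : forall u v : T, (u *+ (p ^ (r - m)) = v *+ (p ^ (r - m)))%R -> u = v.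
  by move=> u v; apply: (tf_cancel Hp Hiso (j := (r - m)%N)).
have tfq : forall u : T, (u *+ (p ^ r) = 0)%R -> u = 0%R.
  by move=> u; apply: (tf_pow Hp Hiso (j := r)).
split.
- exact: (part1 Hm HP Hq tfq).
- exact: (part2 Hm HP Hq He tfe tfq).
- exact: (@part3 gT T act P p r m k Hm HP Hq tfq).
- exact: (@part4 gT T act P p r m k Hm HP Hq He tfe tfq).
- move=> Q sQP; split.
  + by move=> z; apply: Im_pro_sub.
  + by move=> z; apply: Im_inc_sub.
  + by move=> g z Hg; apply: (Im_pro_act Hm sQP Hg).
  + by move=> g z Hg; apply: (Im_inc_act Hm sQP Hg).
Qed.
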